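(* Every abelian Lawson paratopological group is Bohr separated.
   Context: All topological spaces are Hausdorff. A paratopological group is a group with a Hausdorff topology making multiplication continuous; a topological group additionally has continuous inversion. A paratopological group is Lawson if it has a neighborhood base at the unit consisting of subsemigroups. A topological group $K$ is totally bounded if for each neighborhood $U$ of the unit there is a finite $F$ with $FU=UF=K$. A paratopological group is Bohr separated if it admits a continuous bijective homomorphism onto a totally bounded topological group. *)

(* Defs.v *)
From HB Require Import structures.
From mathcomp Require Import all_boot all_algebra.
From mathcomp Require Import all_classical all_reals all_analysis.
Set Implicit Arguments. Unset Strict Implicit. Unset Printing Implicit Defensive.
Local Open Scope classical_set_scope.

Definition is_group (T : Type) (mul : T -> T -> T) (one : T) (inv : T -> T) : Prop :=
  [/\ forall x y z, mul x (mul y z) = mul (mul x y) z,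
      forall x, mul one x = x,
      forall x, mul x one = x,
      forall x, mul (inv x) x = one &
      forall x, mul x (inv x) = one].

Definition is_abelian (T : Type) (mul : T -> T -> T) : Prop :=
  forall x y, mul x y = mul y x.

Definition paratopological_group (T : topologicalType)
  (mul : T -> T -> T) (one : T) (inv : T -> T) : Prop :=
  [/\ is_group mul one inv, hausdorff_space T &
      continuous (fun p : T * T => mul p.1 p.2)].

Definition topological_group (T : topologicalType)
  (mul : T -> T -> T) (one : T) (inv : T -> T) : Prop :=
  paratopological_group mul one inv /\ continuous inv.

Definition lawson (T : topologicalType) (mul : T -> T -> T) (one : T) : Prop :=
  forall U : set T, nbhs one U ->
    exists V : set T, [/\ nbhs one V, V `<=` U &
      forall x y, V x -> V y -> V (mul x y)].

Definition totally_bounded_group (T : topologicalType) (mul : T -> T -> T) (one : T) : Prop :=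
  forall U : set T, nbhs one U ->
    exists F : seq T,
      (forall x, exists f u, [/\ f \in F, U u & x = mul f u]) /\
      (forall x, exists f u, [/\ f \in F, U u & x = mul u f]).

Definition bohr_separated (G : topologicalType) (mul : G -> G -> G) : Prop :=
  exists (K : topologicalType) (mulK : K -> K -> K) (oneK : K) (invK : K -> K)
         (h : G -> K),
    [/\ topological_group mulK oneK invK,
        totally_bounded_group mulK oneK,
        continuous h,
        bijective h &
        forall x y, h (mul x y) = mulK (h x) (h y)].

(* Main.v *)
Require Import Defs.
From HB Require Import structures.
From mathcomp Require Import all_boot all_order all_algebra.
From mathcomp Require Import all_classical all_reals all_analysis.
Import GRing.Theory Num.Theory Order.TTheory.
Set Implicit Arguments. Unset Strict Implicit. Unset Printing Implicit Defensive.
From mathcomp Require Import ring lra zify.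
Local Open Scope classical_set_scope.
Local Open Scope ring_scope.

Lemma intP_mul (P : int -> Prop) : P 0 -> (forall a b, P a -> P b -> P (a - b)) ->
  forall a k, P a -> P (k * a).
Proof.
move=> P0 PB a k Pa.
have PN : forall b, P b -> P (- b) by move=> b Pb; rewrite -sub0r; exact: PB.
have PD : forall b c, P b -> P c -> P (b + c).
  by move=> b c Pb Pc; rewrite -[c]opprK; apply: PB => //; exact: PN.
have Hn : forall n : nat, P (n%:Z * a).
  elim=> [|n IH]; first by rewrite mul0r.
  by rewrite -addn1 PoszD mulrDl mul1r; exact: PD.
case: k => n; first exact: Hn.
by rewrite NegzE mulNr; apply: PN; exact: Hn.
Qed.

Lemma min_mult (P : int -> Prop) : P 0 -> (forall a b, P a -> P b -> P (a - b)) ->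
  (exists k, k != 0 /\ P k) ->
  exists m : nat, [/\ (0 < m)%N, P m%:Z & forall k, P k -> exists q, k = q * m%:Z].
Proof.
move=> P0 PB [k [k0 Pk]].
have PN : forall b, P b -> P (- b) by move=> b Pb; rewrite -sub0r; exact: PB.
have ex : exists n : nat, (0 < n)%N && `[< P n%:Z >].
  exists `|k|%N; apply/andP; split; first by rewrite absz_gt0.
  apply/asboolP; case: (ger0P k) => hk; first by rewrite gez0_abs.
  by rewrite ltz0_abs //; exact: PN.
case: (ex_minnP ex) => m /andP[m0 /asboolP Pm] mmin.
exists m; split => // j Pj.
have mz : m%:Z != 0 by rewrite lt0n in m0; apply/eqP => -[] /eqP; rewrite (negbTE m0).
have Pr : P (j %% m%:Z)%Z.
  have -> : (j %% m%:Z)%Z = j - (j %/ m%:Z)%Z * m%:Z by rewrite {2}(divz_eq j m%:Z); ring.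
  by apply: (PB) => //; exact: (intP_mul P0 PB).
have r0 : (j %% m%:Z)%Z = 0.
  have rge : 0 <= (j %% m%:Z)%Z := modz_ge0 j mz.
  have rlt : ((j %% m%:Z)%Z < m%:Z) by apply: ltz_pmod; rewrite ltz_nat.
  move: rge rlt Pr; case: (j %% m%:Z)%Z => // n _ rlt Pn.
  case: n rlt Pn => // n rlt Pn.
  have : (m <= n.+1)%N by apply: mmin; apply/andP; split => //; exact/asboolP.
  by move: rlt; rewrite ltz_nat => /leq_trans h /h; rewrite ltnn.
by exists (j %/ m%:Z)%Z; rewrite {1}(divz_eq j m%:Z) r0 addr0.
Qed.

Definition eqZ (a b : rat) := (a - b) \is a Num.int.

Lemma eqZ_refl a : eqZ a a. Proof. by rewrite /eqZ subrr rpred0. Qed.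
Lemma eqZ_sym a b : eqZ a b -> eqZ b a.
Proof. by rewrite /eqZ => h; rewrite -opprB rpredN. Qed.
Lemma eqZ_trans a b c : eqZ a b -> eqZ b c -> eqZ a c.
Proof. by rewrite /eqZ => h1 h2; rewrite -[a](subrK b) -addrA rpredD. Qed.
Lemma eqZ_add a b c d : eqZ a b -> eqZ c d -> eqZ (a + c) (b + d).
Proof.
rewrite /eqZ => h1 h2; have -> : a + c - (b + d) = (a - b) + (c - d) by ring.
exact: rpredD.
Qed.
Lemma eqZ_opp a b : eqZ a b -> eqZ (- a) (- b).
Proof. by rewrite /eqZ => h; rewrite -opprD rpredN. Qed.
Lemma eqZ_mulz (k : int) a b : eqZ a b -> eqZ (k%:~R * a) (k%:~R * b).
Proof. rewrite /eqZ -mulrBr => h; by rewrite rpredM // intr_int. Qed.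
Lemma eqZ_congr a b a' b' : a = a' -> b = b' -> eqZ a b -> eqZ a' b'.
Proof. by move=> -> ->. Qed.
Lemma eqZ_int a b : eqZ a b -> (a - b) \is a Num.int. Proof. by []. Qed.

Section Chars.
Variable A : zmodType.

Definition subgrp (H : set A) := H 0 /\ forall a b, H a -> H b -> H (a - b).
Definition homZ (H : set A) (f : A -> rat) :=
  forall a b, H a -> H b -> eqZ (f (a + b)) (f a + f b).
Definition compat (H : set A) (f : A -> rat) (y : A) (c : rat) :=
  forall k : int, H (y *~ k) -> eqZ (k%:~R * c) (f (y *~ k)).
Definition extH (H : set A) (y : A) : set A :=
  [set z | exists h k, H h /\ z = h + y *~ k].
Definition extf (H : set A) (f : A -> rat) (y : A) (c : rat) (z : A) : rat :=
  match pselect (exists hk : A * int, H hk.1 /\ z = hk.1 + y *~ hk.2) with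
  | left e => let hk := projT1 (cid e) in f hk.1 + hk.2%:~R * c
  | right _ => 0 end.

Lemma subgrpN H a : subgrp H -> H a -> H (- a).
Proof. by move=> [H0 HB] Ha; rewrite -sub0r; apply: HB. Qed.
Lemma subgrpD H a b : subgrp H -> H a -> H b -> H (a + b).
Proof.
move=> sH Ha Hb; rewrite -[b]opprK; case: (sH) => _ HB; apply: HB => //.
exact: subgrpN.
Qed.
Lemma subgrpZ H a k : subgrp H -> H a -> H (a *~ k).
Proof.
move=> sH Ha.
have Hn : forall n : nat, H (a *+ n).
  elim=> [|n IH]; first by rewrite mulr0n; case: sH.
  by rewrite mulrS; apply: subgrpD.
case: k => n; first exact: Hn.
by rewrite NegzE mulrNz; apply: subgrpN => //; exact: Hn.
Qed.

Lemma homZ0 H f : subgrp H -> homZ H f -> eqZ (f 0) 0.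
Proof.
move=> [H0 _] hf; have := hf 0 0 H0 H0; rewrite addr0 /eqZ => h.
have -> : f 0 - 0 = - (f 0 - (f 0 + f 0)) by ring.
by rewrite rpredN.
Qed.

Lemma homZN H f a : subgrp H -> homZ H f -> H a -> eqZ (f (- a)) (- f a).
Proof.
move=> sH hf Ha; have := hf a (- a) Ha (subgrpN sH Ha); rewrite subrr => h1.
have h0 := homZ0 sH hf.
have := eqZ_trans (eqZ_sym h1) h0 => h2.
have := eqZ_add h2 (eqZ_refl (- f a)).
by apply: eqZ_congr; ring.
Qed.

Lemma homZB H f a b : subgrp H -> homZ H f -> H a -> H b -> eqZ (f (a - b)) (f a - f b).
Proof.
move=> sH hf Ha Hb; have := hf a (- b) Ha (subgrpN sH Hb) => h1.
apply: (eqZ_trans h1); apply: eqZ_add; first exact: eqZ_refl.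
exact: (homZN sH hf Hb).
Qed.

Lemma homZZ H f a k : subgrp H -> homZ H f -> H a -> eqZ (f (a *~ k)) (k%:~R * f a).
Proof.
move=> sH hf Ha.
have Hn : forall n : nat, eqZ (f (a *+ n)) (n%:R * f a).
  elim=> [|n IH]; first by rewrite !mulr0n mul0r; exact: (homZ0 sH hf).
  rewrite mulrS; have HH : H (a *+ n) by exact: (subgrpZ n sH Ha).
  apply: (eqZ_trans (hf _ _ Ha HH)).
  have := eqZ_add (eqZ_refl (f a)) IH; apply: eqZ_congr => //.
  by rewrite -natr1 mulrDl mul1r addrC.
case: k => n; first exact: Hn.
rewrite NegzE mulrNz; apply: (eqZ_trans (homZN sH hf (subgrpZ n.+1 sH Ha))).
have := eqZ_opp (Hn n.+1); apply: eqZ_congr => //.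
by rewrite mulNr.
Qed.

Lemma extf_wd H f y c h h' k k' : subgrp H -> homZ H f -> compat H f y c ->
  H h -> H h' -> h + y *~ k = h' + y *~ k' ->
  eqZ (f h + k%:~R * c) (f h' + k'%:~R * c).
Proof.
move=> sH hf cp Hh Hh' e.
have e2 : y *~ (k - k') = h' - h.
  rewrite mulrzBr; apply: (addrI h); rewrite addrA e addrK (addrC h (h' - h)).
  by rewrite subrK.
have := cp (k - k'); rewrite e2 => /(_ (proj2 sH _ _ Hh' Hh)) h1.
have h2 := eqZ_trans h1 (homZB sH hf Hh' Hh).
have := eqZ_add h2 (eqZ_refl (f h + k'%:~R * c)).
by apply: eqZ_congr; rewrite ?intrB; ring.
Qed.

Lemma extf_spec H f y c h k : subgrp H -> homZ H f -> compat H f y c -> H h ->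
  eqZ (extf H f y c (h + y *~ k)) (f h + k%:~R * c).
Proof.
move=> sH hf cp Hh; rewrite /extf; case: pselect => [e|ne]; last first.
  by exfalso; apply: ne; exists (h, k).
case: (cid e) => [[h' k']] [/= Hh' e'] /=.
exact: (extf_wd sH hf cp Hh' Hh (esym e')).
Qed.

Lemma ext_subgrp H y : subgrp H -> subgrp (extH H y).
Proof.
move=> sH; split; first by exists 0, 0; split; [case: sH|rewrite mulr0z addr0].
move=> _ _ [h [k [Hh ->]]] [h' [k' [Hh' ->]]].
exists (h - h'), (k - k'); split; first exact: (proj2 sH).
by rewrite mulrzBr opprD addrACA.
Qed.

Lemma ext_homZ H f y c : subgrp H -> homZ H f -> compat H f y c ->
  homZ (extH H y) (extf H f y c).
Proof.
move=> sH hf cp _ _ [h [k [Hh ->]]] [h' [k' [Hh' ->]]].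
have -> : h + y *~ k + (h' + y *~ k') = (h + h') + y *~ (k + k') by rewrite mulrzDr addrACA.
apply: (eqZ_trans (extf_spec _ sH hf cp (subgrpD sH Hh Hh'))).
apply: eqZ_sym; apply: (eqZ_trans (eqZ_add (extf_spec _ sH hf cp Hh) (extf_spec _ sH hf cp Hh'))).
have := eqZ_add (eqZ_sym (hf _ _ Hh Hh')) (eqZ_refl ((k + k')%:~R * c)).
by apply: eqZ_congr; rewrite ?intrD; ring.
Qed.

Lemma ext_sub H f y c h : subgrp H -> homZ H f -> compat H f y c -> H h ->
  extH H y h /\ eqZ (extf H f y c h) (f h).
Proof.
move=> sH hf cp Hh; split; first by exists h, 0; rewrite mulr0z addr0.
have := extf_spec 0 sH hf cp Hh; rewrite mulr0z addr0 => h1.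
by apply: (eqZ_trans h1); apply: eqZ_congr (eqZ_refl _) => //; rewrite mul0r addr0.
Qed.
End Chars.

Lemma notint01 (c : rat) : 0 < c -> c < 1 -> c \isn't a Num.int.
Proof.
move=> c0 c1; apply/negP => /intrP [z ez]; move: c0 c1; rewrite ez ltr0z ltrz1.
by move=> h1 h2; lia.
Qed.

Section Compat.
Variable A : zmodType.

Lemma mult_sub (H : set A) y : subgrp H ->
  [/\ H (y *~ 0) & forall a b, H (y *~ a) -> H (y *~ b) -> H (y *~ (a - b))].
Proof.
move=> sH; split; first by rewrite mulr0z; case: sH.
by move=> a b ha hb; rewrite mulrzBr; exact: (proj2 sH).
Qed.

Lemma compat_exists (H : set A) f y : subgrp H -> homZ H f -> exists c, compat H f y c.
Proof.
move=> sH hf; have [P0 PB] := mult_sub y sH.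
case: (pselect (exists k, k != 0 /\ H (y *~ k))) => [ex|nex].
  have [m [m0 Pm Pdiv]] := min_mult (P := fun k => H (y *~ k)) P0 PB ex.
  exists (f (y *~ m%:Z) / m%:R) => k /[dup] Pk /Pdiv [q ->].
  have hz := homZZ q sH hf Pm.
  rewrite (mulrC q) [y *~ (_ * _)]mulrzA; apply: eqZ_sym; apply: (eqZ_trans hz).
  apply: eqZ_congr (eqZ_refl _) => //.
  have mn : (m%:R : rat) != 0 by rewrite pnatr_eq0 -lt0n.
  by rewrite intrM -[(m%:~R : rat)]/(m%:R); field.
exists 0 => k Pk; have k0 : k = 0.
  by apply/eqP; apply/negPn/negP => kn; apply: nex; exists k.
rewrite k0 mulr0z mul0r; apply: eqZ_sym; exact: (homZ0 sH hf).
Qed.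

Lemma compat_init (N : set A) x : subgrp N -> ~ N x ->
  exists c, compat N (fun _ => 0) x c /\ c \isn't a Num.int.
Proof.
move=> sN Nx; have [P0 PB] := mult_sub x sN.
case: (pselect (exists k, k != 0 /\ N (x *~ k))) => [ex|nex].
  have [m [m0 Pm Pdiv]] := min_mult (P := fun k => N (x *~ k)) P0 PB ex.
  have m1 : (1 < m)%N.
    case: m m0 Pm {Pdiv} => [|[|m]] //= _; rewrite mulr1z => /Nx [].
  exists (1 / m%:R); split.
    move=> k /Pdiv [q ->]; rewrite /eqZ subr0.
    have mn : (m%:R : rat) != 0 by rewrite pnatr_eq0 -lt0n.
    by rewrite intrM -[(m%:~R : rat)]/(m%:R) mul1r -mulrA divff // mulr1 intr_int.
  apply: notint01; first by rewrite divr_gt0 // ltr0n; lia.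
  by rewrite ltr_pdivrMr ?ltr0n; [rewrite mul1r ltr1n | lia].
exists (1 / 2); split; last by apply: notint01.
move=> k Pk; have k0 : k = 0.
  by apply/eqP; apply/negPn/negP => kn; apply: nex; exists k.
by rewrite k0 mul0r; exact: eqZ_refl.
Qed.
End Compat.

Section ZornSec.
Variable A : zmodType.
Variables (N : set A) (x : A).
Hypothesis sN : subgrp N.
Hypothesis Nx : ~ N x.

Definition good (p : set A * (A -> rat)) :=
  [/\ subgrp p.1, homZ p.1 p.2, N `<=` p.1, (forall n, N n -> eqZ (p.2 n) 0) &
      (p.1 x /\ ~ eqZ (p.2 x) 0)].

Definition S := {p | good p}.

Definition Rel (s t : S) : bool :=
  `[< (sval s).1 `<=` (sval t).1 /\
      forall a, (sval s).1 a -> eqZ ((sval t).2 a) ((sval s).2 a) >].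

Lemma ext_good (p : set A * (A -> rat)) y c : good p -> compat p.1 p.2 y c ->
  good (extH p.1 y, extf p.1 p.2 y c).
Proof.
case=> sH hf NH N0 [Hx nx] cp; split => //=; last split.
- exact: ext_subgrp.
- exact: ext_homZ.
- by move=> n /NH Hn; case: (ext_sub sH hf cp Hn).
- move=> n Nn; have [_ e] := ext_sub sH hf cp (NH _ Nn).
  exact: eqZ_trans e (N0 _ Nn).
- by case: (ext_sub sH hf cp Hx).
- move=> e; apply: nx; have [_ e'] := ext_sub sH hf cp Hx.
  exact: eqZ_trans (eqZ_sym e') e.
Qed.

Lemma ext_Rel (s : S) y c (cp : compat (sval s).1 (sval s).2 y c) :
  Rel s (exist _ _ (ext_good (svalP s) cp)).
Proof.
apply/asboolP; split => /= a Ha; have [sH hf _ _ _] := svalP s.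
  by case: (ext_sub sH hf cp Ha).
by case: (ext_sub sH hf cp Ha).
Qed.

Lemma good0 : exists c, good (extH N x, extf N (fun _ => 0) x c).
Proof.
have [c [cp nc]] := compat_init sN Nx.
have hf : homZ N (fun _ => 0) by move=> a b _ _; rewrite addr0; exact: eqZ_refl.
exists c; split => //=; last split.
- exact: ext_subgrp.
- exact: ext_homZ.
- by move=> n Nn; case: (ext_sub sN hf cp Nn).
- by move=> n Nn; have [_ e] := ext_sub sN hf cp Nn.
- by exists 0, 1; split; [case: sN | rewrite mulr1z add0r].
- move=> e; have := extf_spec 1 sN hf cp (proj1 sN); rewrite mulr1z add0r => e'.
  have := eqZ_trans (eqZ_sym e') e; rewrite add0r mul1r /eqZ subr0.
  by move/negP: nc.
Qed.

Lemma Rel_refl : forall t, Rel t t.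
Proof. by move=> t; apply/asboolP; split => // a _; exact: eqZ_refl. Qed.

Lemma Rel_trans : forall r s t, Rel r s -> Rel s t -> Rel r t.
Proof.
move=> r s t /asboolP [h1 e1] /asboolP [h2 e2]; apply/asboolP; split.
  by move=> a /h1 /h2.
by move=> a Ha; apply: eqZ_trans (e2 _ (h1 _ Ha)) (e1 _ Ha).
Qed.

Section Chain.
Variable C : set S.
Hypothesis Ctot : total_on C Rel.
Variable s0 : S.
Hypothesis Cs0 : C s0.

Definition cH : set A := [set z | exists s, C s /\ (sval s).1 z].
Definition cf (z : A) : rat :=
  match pselect (exists s, C s /\ (sval s).1 z) with
  | left e => (sval (projT1 (cid e))).2 z
  | right _ => 0 end.

Lemma cf_key s z : C s -> (sval s).1 z -> eqZ (cf z) ((sval s).2 z).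
Proof.
move=> Cs Hz; rewrite /cf; case: pselect => [e|ne]; last by exfalso; apply: ne; exists s.
case: (cid e) => s' [Cs' Hz'] /=.
case: (Ctot Cs Cs') => /asboolP [_ h]; first exact: h.
exact: eqZ_sym (h _ Hz').
Qed.

Lemma chain_common s1 s2 : C s1 -> C s2 ->
  exists s, [/\ C s, (sval s1).1 `<=` (sval s).1 & (sval s2).1 `<=` (sval s).1].
Proof.
move=> C1 C2; case: (Ctot C1 C2) => /asboolP [h _].
  by exists s2; split.
by exists s1; split.
Qed.

Lemma chain_good : good (cH, cf).
Proof.
have [sH0 _ NH0 _ [Hx0 nx0]] := svalP s0.
split => //=; last split.
- split; first by exists s0; split => //; case: sH0.
  move=> a b [s1 [C1 H1]] [s2 [C2 H2]]; have [s [Cs h1 h2]] := chain_common C1 C2.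
  by exists s; split => //; have [sH _ _ _ _] := svalP s; apply: (proj2 sH); auto.
- move=> a b [s1 [C1 H1]] [s2 [C2 H2]]; have [s [Cs h1 h2]] := chain_common C1 C2.
  have [sH hf _ _ _] := svalP s.
  have Ha := h1 _ H1; have Hb := h2 _ H2; have Hab := subgrpD sH Ha Hb.
  apply: (eqZ_trans (cf_key Cs Hab)); apply: (eqZ_trans (hf _ _ Ha Hb)).
  exact: eqZ_add (eqZ_sym (cf_key Cs Ha)) (eqZ_sym (cf_key Cs Hb)).
- by move=> n Nn; exists s0; split => //; exact: NH0.
- move=> n Nn; have [_ _ _ N0 _] := svalP s0.
  exact: eqZ_trans (cf_key Cs0 (NH0 _ Nn)) (N0 _ Nn).
- by exists s0.
- by move=> e; apply: nx0; exact: eqZ_trans (eqZ_sym (cf_key Cs0 Hx0)) e.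
Qed.

Lemma chain_ub : forall s, C s -> Rel s (exist _ _ chain_good).
Proof.
move=> s Cs; apply/asboolP; split => /=.
  by move=> a Ha; exists s.
by move=> a Ha; exact: cf_key.
Qed.
End Chain.

Theorem char_sep_aux : exists chi : A -> rat,
  [/\ forall a b, eqZ (chi (a + b)) (chi a + chi b),
      forall n, N n -> eqZ (chi n) 0 & ~ eqZ (chi x) 0].
Proof.
have [c g0] := good0.
pose t0 : S := exist _ _ g0.
have [t tmax] := ZL_preorder t0 Rel_refl Rel_trans (fun C Ctot =>
  match pselect (exists s, C s) with
  | left e => ex_intro _ _ (chain_ub Ctot (projT2 (cid e)))
  | right ne => ex_intro (fun t => forall s, C s -> Rel s t) t0
                  (fun s Cs => False_ind _ (ne (ex_intro _ s Cs)))
  end).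
have [sH hf NH N0 [Hx nx]] := svalP t.
have full : forall y, (sval t).1 y.
  move=> y; apply: contrapT => ny.
  have [c' cp] := compat_exists y sH hf.
  have := tmax _ (ext_Rel cp) => /asboolP [h _].
  apply: ny; apply: h => /=; exists 0, 1; split; first by case: sH.
  by rewrite mulr1z add0r.
exists (sval t).2; split => //.
by move=> a b; apply: hf.
Qed.
End ZornSec.

Section Gz.
Variables (G : topologicalType) (mul : G -> G -> G) (one : G) (inv : G -> G).
Hypothesis Hg : is_group mul one inv.
Hypothesis Hab : is_abelian mul.
Definition Gz (m : G -> G -> G) (o : G) (i : G -> G) (_ : is_group m o i) (_ : is_abelian m)
  : Type := G.
Let mulA : associative mul. Proof. by case: Hg => h *; move=> x y z; rewrite h. Qed.
Let mul1 : left_id one mul. Proof. by case: Hg. Qed.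
Let mulV : left_inverse one inv mul. Proof. by case: Hg. Qed.
Let mulC : commutative mul. Proof. exact: Hab. Qed.
HB.instance Definition _ := Choice.on (Gz Hg Hab).
HB.instance Definition _ :=
  @GRing.isZmodule.Build (Gz Hg Hab) one inv mul mulA mulC mul1 mulV.
End Gz.


Definition small (e r : rat) := exists z : int, `|r - z%:~R| < e.

Lemma small_0 e : 0 < e -> small e 0.
Proof. by move=> e0; exists 0; rewrite subr0 normr0. Qed.
Lemma small_add e d r s : small e r -> small d s -> small (e + d) (r + s).
Proof.
move=> [z1 h1] [z2 h2]; exists (z1 + z2).
have -> : r + s - (z1 + z2)%:~R = (r - z1%:~R) + (s - z2%:~R) by rewrite intrD; ring.
by apply: le_lt_trans (ler_normD _ _) _; exact: ltrD.
Qed.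
Lemma small_opp e r : small e r -> small e (- r).
Proof. by move=> [z h]; exists (- z); rewrite intrN -opprD normrN. Qed.
Lemma small_le e d r : e <= d -> small e r -> small d r.
Proof. by move=> ed [z h]; exists z; exact: lt_le_trans h ed. Qed.
Lemma small_eqZ e r s : eqZ r s -> small e r -> small e s.
Proof.
move=> /intrP [w ew] [z h]; exists (z - w).
by have -> : s - (z - w)%:~R = r - z%:~R by rewrite intrB -ew; ring.
Qed.
Lemma small_half e r s : small (e / 2) r -> small (e / 2) s -> small e (r + s).
Proof. by move=> h1 h2; have := small_add h1 h2; rewrite -splitr. Qed.

Definition catf X n1 n2 (c1 : 'I_n1 -> X) (c2 : 'I_n2 -> X) : 'I_(n1 + n2) -> X :=
  fun i => match fintype.split i with inl j => c1 j | inr j => c2 j end.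
Lemma catfl X n1 n2 (c1 : 'I_n1 -> X) (c2 : 'I_n2 -> X) j : catf c1 c2 (lshift n2 j) = c1 j.
Proof. by rewrite /catf (unsplitK (inl _ j)). Qed.
Lemma catfr X n1 n2 (c1 : 'I_n1 -> X) (c2 : 'I_n2 -> X) j : catf c1 c2 (rshift n1 j) = c2 j.
Proof. by rewrite /catf (unsplitK (inr _ j)). Qed.
Lemma catf_all X n1 n2 (c1 : 'I_n1 -> X) (c2 : 'I_n2 -> X) (P : X -> Prop) :
  (forall j, P (c1 j)) -> (forall j, P (c2 j)) -> forall i, P (catf c1 c2 i).
Proof. by move=> h1 h2 i; rewrite /catf; case: fintype.split. Qed.

Section K.
Variables (G : topologicalType) (mul : G -> G -> G) (one : G).
Definition admissible (chi : G -> rat) :=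
  (forall a b, eqZ (chi (mul a b)) (chi a + chi b)) /\ nbhs one (fun g => eqZ (chi g) 0).
Definition Knbhs (p : G) : set_system G := fun U =>
  exists n (cs : 'I_n -> G -> rat) (e : rat),
    [/\ 0 < e, forall i, admissible (cs i) &
        forall g, (forall i, small e (cs i g - cs i p)) -> U g].
Definition K (m : G -> G -> G) (o : G) : Type := G.
HB.instance Definition _ := Choice.on (K mul one).
HB.instance Definition _ := hasNbhs.Build (K mul one) Knbhs.
Lemma Knbhs_filter (p : K mul one) : ProperFilter (nbhs p).
Proof.
split.
  by move=> [n [cs [e [e0 _ h]]]]; apply: (h p) => i; rewrite subrr; exact: small_0.
split.
- exists 0, (fun _ _ => 0), 1; split => //; by case.
- move=> A B [n1 [c1 [e1 [e10 a1 h1]]]] [n2 [c2 [e2 [e20 a2 h2]]]].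
  exists (n1 + n2), (catf c1 c2), (Num.min e1 e2); split.
  + by rewrite lt_min e10.
  + exact: catf_all.
  + move=> g hg; split.
      apply: h1 => j; have := hg (lshift n2 j); rewrite catfl; apply: small_le.
      by rewrite ge_min lexx.
    apply: h2 => j; have := hg (rshift n1 j); rewrite catfr; apply: small_le.
    by rewrite ge_min lexx orbT.
- move=> A B AB [n [cs [e [e0 a h]]]]; exists n, cs, e; split => // g /h; exact: AB.
Qed.
Lemma Knbhs_singleton (p : K mul one) A : nbhs p A -> A p.
Proof. by move=> [n [cs [e [e0 _ h]]]]; apply: (h p) => i; rewrite subrr; exact: small_0. Qed.
Lemma Knbhs_nbhs (p : K mul one) (A : set (K mul one)) : nbhs p A -> nbhs p (nbhs^~ A).
Proof.
move=> [n [cs [e [e0 a h]]]]; exists n, cs, (e / 2); split => //; first by rewrite divr_gt0.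
move=> g hg; exists n, cs, (e / 2); split => //; first by rewrite divr_gt0.
move=> g' hg'; apply: h => i; have := small_half (hg' i) (hg i).
by apply: small_eqZ; rewrite /eqZ (_ : _ - _ = 0) ?rpred0 //; ring.
Qed.
HB.instance Definition _ := Nbhs_isNbhsTopological.Build (K mul one) Knbhs_filter Knbhs_singleton Knbhs_nbhs.

End K.

Lemma zhelp (Z : zmodType) (g g' b b' : Z) : (g - g') + (g' + b' + b) = g + b + b'.
Proof. by rewrite !addrA subrK addrAC. Qed.

Section Main.
Variables (G : topologicalType) (mul : G -> G -> G) (one : G) (inv : G -> G).
Hypothesis Hpg : paratopological_group mul one inv.
Hypothesis Hab : is_abelian mul.
Hypothesis Hlaw : lawson mul one.

Let Hg : is_group mul one inv. Proof. by case: Hpg. Qed.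
Let hausG : hausdorff_space G. Proof. by case: Hpg. Qed.
Let contG : continuous (fun p : G * G => mul p.1 p.2). Proof. by case: Hpg. Qed.
Let mulA x y z : mul x (mul y z) = mul (mul x y) z. Proof. by case: Hg. Qed.
Let mul1 x : mul one x = x. Proof. by case: Hg. Qed.
Let mulr1 x : mul x one = x. Proof. by case: Hg. Qed.
Let mulV x : mul (inv x) x = one. Proof. by case: Hg. Qed.
Let mulrV x : mul x (inv x) = one. Proof. by case: Hg. Qed.

Lemma sep (x : G) : x <> one ->
  exists chi, admissible mul one chi /\ ~ eqZ (chi x) 0.
Proof.
move=> x1.
have ncl : ~ cluster (nbhs x) one by move=> /hausG.
have [A [B [nA nB dAB]]] : exists A B, [/\ nbhs x A, nbhs one B & ~ (A `&` B !=set0)].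
  apply: contrapT => ne; apply: ncl => A B nA nB; apply: contrapT => h; apply: ne.
  by exists A, B.
have nA' : nbhs (mul (x, one).1 (x, one).2) A by rewrite /= mulr1.
have [[P1 P2] /= [nP1 nP2] sub] := contG nA'.
have [V [nV VU Vsg]] := Hlaw (filterI nP2 nB).
pose N : set (Gz Hg Hab) := [set g | exists a b, [/\ V a, V b & mul g b = a]].
have V1 : V one := nbhs_singleton nV.
have sN : subgrp N.
  split; first by exists one, one; split => //; rewrite mulr1.
  move=> g g' [a [b [Va Vb ea]]] [a' [b' [Va' Vb' ea']]].
  exists (mul a b'), (mul a' b); split; [exact: Vsg|exact: Vsg|].
  rewrite -ea -ea'; exact: (zhelp (Z := Gz Hg Hab)).
have Nx : ~ N x.
  move=> [a [b [Va Vb e]]]; apply: dAB; exists a; split; last by case: (VU _ Va).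
  rewrite -e; apply: (sub (x, b)); split => //=; first exact: nbhs_singleton.
  by case: (VU _ Vb).
have [chi [hchi N0 nx]] := char_sep_aux sN Nx.
exists chi; split => //; split; first by move=> a b; exact: hchi.
apply: filterS nV => g Vg; apply: N0; exists g, one; split => //.
Qed.

Lemma adm_one chi : admissible mul one chi -> eqZ (chi one) 0.
Proof.
move=> [h _]; have := h one one; rewrite mul1 /eqZ => e.
have -> : chi one - 0 = - (chi one - (chi one + chi one)) by ring.
by rewrite rpredN.
Qed.

Lemma adm_inv chi a : admissible mul one chi -> eqZ (chi (inv a)) (- chi a).
Proof.
move=> ad; have := (proj1 ad) (inv a) a; rewrite mulV => e.
have := eqZ_trans (eqZ_sym e) (adm_one ad) => e2.
by have := eqZ_add e2 (eqZ_refl (- chi a)); apply: eqZ_congr; ring.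
Qed.

Lemma adm_div chi a b : admissible mul one chi ->
  eqZ (chi (mul (inv a) b)) (chi b - chi a).
Proof.
move=> ad; apply: (eqZ_trans ((proj1 ad) _ _)).
by have := eqZ_add (adm_inv a ad) (eqZ_refl (chi b)); apply: eqZ_congr; ring.
Qed.

Lemma adm_mul2 chi a b p q : admissible mul one chi ->
  eqZ (chi (mul a b) - chi (mul p q)) ((chi a - chi p) + (chi b - chi q)).
Proof.
move=> ad; have := eqZ_add ((proj1 ad) a b) (eqZ_opp ((proj1 ad) p q)).
by apply: eqZ_congr; ring.
Qed.

Local Notation Ky := (K mul one).

Lemma ball_nbhs n (cs : 'I_n -> G -> rat) e (p : Ky) : 0 < e -> (forall i, admissible mul one (cs i)) ->
  nbhs p [set g : Ky | forall i, small e (cs i g - cs i p)].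
Proof. by move=> e0 a; exists n, cs, e; split. Qed.

Lemma mulK_cont : continuous (fun p : Ky * Ky => (mul p.1 p.2 : Ky)).
Proof.
move=> [p q] U [n [cs [e [e0 a h]]]].
have e20 : 0 < e / 2 by rewrite divr_gt0.
exists ([set g : Ky | forall i, small (e/2) (cs i g - cs i p)],
        [set g : Ky | forall i, small (e/2) (cs i g - cs i q)]).
  by split; apply: ball_nbhs.
move=> [g g'] /= [hg hg']; apply: h => i.
apply: small_eqZ (eqZ_sym (adm_mul2 _ _ _ _ (a i))) _.
exact: small_half.
Qed.

Lemma invK_cont : continuous (inv : Ky -> Ky).
Proof.
move=> p U [n [cs [e [e0 a h]]]].
apply: filterS (ball_nbhs p e0 a) => g hg; apply: h => i.
apply: small_eqZ (small_opp (hg i)).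
have := eqZ_add (adm_inv g (a i)) (eqZ_opp (adm_inv p (a i))).
by move/eqZ_sym; apply: eqZ_congr; ring.
Qed.

Lemma id_cont : continuous (fun g : G => (g : Ky)).
Proof.
move=> p U [n [cs [e [e0 a h]]]] /=.
have Hi : forall i, nbhs p (fun g => eqZ (cs i (mul (inv p) g)) 0).
  move=> i; have nW : nbhs (mul (inv p, p).1 (inv p, p).2) (fun g => eqZ (cs i g) 0).
    by rewrite /= mulV; case: (a i).
  have [[P1 P2] /= [nP1 nP2] sub] := contG nW.
  apply: filterS nP2 => g P2g; apply: (sub (inv p, g)); split => //=.
  exact: nbhs_singleton.
have hall := @filter_forall G 'I_n (fun i g => eqZ (cs i (mul (inv p) g)) 0) (nbhs p) (nbhs_filter p) Hi.
apply: (@filterS _ (nbhs p) _ _ _ _ hall) => g hg; apply: h => i; apply: small_eqZ (small_0 e0).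
exact: eqZ_sym (eqZ_trans (eqZ_sym (adm_div p g (a i))) (hg i)).
Qed.

Lemma small_all_int r : (forall e, 0 < e -> small e r) -> eqZ r 0.
Proof.
move=> hs; rewrite /eqZ subr0; apply: contrapT => nr.
set z0 := Num.floor r.
have l1 : z0%:~R <= r := floor_le r.
have l2 : r < (z0 + 1)%:~R := floorD1_gt r.
have l1' : z0%:~R < r.
  rewrite lt_neqAle l1 andbT; apply/eqP => e; apply: nr; rewrite -e; exact: intr_int.
have [z hz] : small (Num.min (r - z0%:~R) ((z0 + 1)%:~R - r)) r.
  by apply: hs; rewrite lt_min !subr_gt0 l1' l2.
move: hz; set m := Num.min _ _.
have m1 : m <= r - z0%:~R by rewrite /m ge_min lexx.
have m2 : m <= (z0 + 1)%:~R - r by rewrite /m ge_min lexx orbT.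
rewrite ltr_norml => /andP [h1 h2].
have : (z <= z0) \/ (z0 + 1 <= z) by lia.
case => hz.
  have : z%:~R <= (z0%:~R : rat) by rewrite ler_int.
  move: m1 m2 h1 h2; rewrite intrD; lra.
have : (z0 + 1)%:~R <= (z%:~R : rat) by rewrite ler_int.
move: m1 m2 h1 h2; rewrite !intrD; lra.
Qed.

Lemma hausK : hausdorff_space Ky.
Proof.
move=> p q cl; apply: contrapT => npq.
have x1 : mul p (inv q) <> one.
  move=> e; apply: npq; rewrite -(mulr1 p) -(mulV q) mulA e mul1 //.
have [chi [ad nx]] := sep x1.
have nr : ~ eqZ (chi p - chi q) 0.
  move=> e; apply: nx; apply: (eqZ_trans _ e).
  rewrite Hab; apply: (eqZ_trans (adm_div _ _ ad)); exact: eqZ_refl.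
have [e e0 ne] : exists2 e, 0 < e & ~ small e (chi p - chi q).
  apply: contrapT => hn; apply: nr; apply: small_all_int => e e0.
  by apply: contrapT => ns; apply: hn; exists e.
have e20 : 0 < e / 2 by rewrite divr_gt0.
pose cs := fun _ : 'I_1 => chi.
have ad1 : forall i, admissible mul one (cs i) by [].
have [g [hp hq]] := cl _ _ (ball_nbhs p e20 ad1) (ball_nbhs q e20 ad1).
apply: ne; have := small_half (hq ord0) (small_opp (hp ord0)).
by rewrite /cs (_ : _ + _ = chi p - chi q) //; ring.
Qed.

Definition fr (r : rat) := r - (Num.floor r)%:~R.
Lemma fr_ge0 r : 0 <= fr r. Proof. by rewrite /fr subr_ge0 floor_le. Qed.
Lemma fr_lt1 r : fr r < 1.
Proof. by have := floorD1_gt r; rewrite intrD /fr; lra. Qed.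

Lemma cell_close (m : nat) (r s : rat) : (0 < m)%N ->
  Num.floor (m%:R * fr r) = Num.floor (m%:R * fr s) ->
  `|fr r - fr s| * m%:R < 1.
Proof.
move=> m0 e.
have a1 := floor_le (m%:R * fr r); have a2 := floorD1_gt (m%:R * fr r).
have b1 := floor_le (m%:R * fr s); have b2 := floorD1_gt (m%:R * fr s).
rewrite e intrD in a1 a2.
have mp : (0 : rat) <= m%:R by rewrite ler0n.
rewrite -normr_nat -normrM ltr_norml; move: a1 a2 b1 b2; rewrite intrD.
set k := (Num.floor _)%:~R => a1 a2 b1 b2; apply/andP; split; nra.
Qed.

Lemma tbK : totally_bounded_group (mul : Ky -> Ky -> Ky) one.
Proof.
move=> U [n [cs [e [e0 a h]]]].
have ie0 : 0 <= e^-1 by rewrite invr_ge0 ltW.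
pose m := (Num.Def.archi_bound e^-1).+1.
have m0 : (0 < m)%N by [].
have me : 1 < m%:R * e.
  have h0 := archi_boundP ie0; have hv : e * e^-1 = 1 by rewrite mulfV ?gt_eqF.
  rewrite /m -addn1 natrD; move: h0 hv; set b := (_%:R); set v := e^-1 => h0 hv.
  nra.
pose cellv (r : rat) : nat := `|Num.floor (m%:R * fr r)|%N.
pose cell (g : G) : {ffun 'I_n -> 'I_m.+1} := [ffun i => inord (cellv (cs i g))].
pose rep (c : {ffun 'I_n -> 'I_m.+1}) : G :=
  match pselect (exists g, cell g = c) with
  | left ex => projT1 (cid ex) | right _ => one end.
have rep_spec : forall g, cell (rep (cell g)) = cell g.
  move=> g; rewrite /rep; case: pselect => [ex|nex]; last by exfalso; apply: nex; exists g.
  by case: (cid ex).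
have cellv_le : forall r, (cellv r < m.+1)%N.
  move=> r; rewrite /cellv ltnS.
  have f0 : 0 <= Num.floor (m%:R * fr r) by rewrite floor_ge0 mulr_ge0 ?ler0n ?fr_ge0.
  have : Num.floor (m%:R * fr r) < m%:Z.
    rewrite floor_lt_int; change (m%:R * fr r < (m%:R : rat)).
    have := fr_lt1 r; have := fr_ge0 r; have : (0:rat) < m%:R by rewrite ltr0n.
    set M := (m%:R : rat); set t := fr r; nra.
  move: f0; case: (Num.floor _) => // k _; rewrite ltz_nat /=; exact: ltnW.
have close : forall g f i, cell g = cell f -> small e (cs i g - cs i f).
  move=> g f i eq; have := congr1 (fun c : {ffun 'I_n -> 'I_m.+1} => val (c i)) eq.
  rewrite /= !ffunE /= !inordK // /cellv => eabs.
  have ef : Num.floor (m%:R * fr (cs i g)) = Num.floor (m%:R * fr (cs i f)).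
    rewrite -[LHS]gez0_abs ?floor_ge0 ?mulr_ge0 ?ler0n ?fr_ge0 //.
    by rewrite -[RHS]gez0_abs ?floor_ge0 ?mulr_ge0 ?ler0n ?fr_ge0 // eabs.
  have cl := cell_close m0 ef.
  exists (Num.floor (cs i g) - Num.floor (cs i f)).
  have -> : cs i g - cs i f - (Num.floor (cs i g) - Num.floor (cs i f))%:~R =
            fr (cs i g) - fr (cs i f) by rewrite /fr intrB; ring.
  have np : 0 <= `|fr (cs i g) - fr (cs i f)| := normr_ge0 _.
  move: cl me np; set d := `|_|; set M := (m%:R : rat) => cl me np.
  have M0 : 0 < M by rewrite /M ltr0n.
  nra.
pose F := [seq (rep c : Ky) | c <- enum {ffun 'I_n -> 'I_m.+1}].
have good : forall x : Ky, exists f u, [/\ f \in F, U u, x = mul f u & x = mul u f].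
  move=> x; exists (rep (cell x)), (mul (inv (rep (cell x))) x); split.
  - by apply: map_f; rewrite mem_enum.
  - apply: h => i; apply: small_eqZ (close x (rep (cell x)) i (esym (rep_spec x))).
    have := eqZ_add (adm_div (rep (cell x)) x (a i)) (eqZ_opp (adm_one (a i))).
    by move/eqZ_sym; apply: eqZ_congr => //; ring.
  - by rewrite mulA mulrV mul1.
  - by rewrite Hab mulA mulrV mul1.
exists F; split => x; have [f [u [fF Uu e1 e2]]] := good x; exists f, u; split => //.
Qed.
End Main.

Theorem proposition5 (G : topologicalType) (mul : G -> G -> G) (one : G) (inv : G -> G) :
  paratopological_group mul one inv ->
  is_abelian mul ->
  lawson mul one ->
  bohr_separated mul.
Proof.
move=> Hpg Hab Hlaw.
exists (K mul one), (mul : K mul one -> K mul one -> K mul one), one, inv,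
  (fun g : G => (g : K mul one)); split.
- split; last exact: (invK_cont Hpg).
  split; first by case: Hpg.
    exact: (hausK Hpg Hab Hlaw).
  exact: (@mulK_cont G mul one).
- exact: (tbK Hpg Hab).
- exact: (id_cont Hpg).
- by exists id.
- by [].
Qed.
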